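(* Consider Algorithm GEN with parameter $t_0$ on an instance satisfying the standing assumption, with an edge labeling as in the context. For each edge $(i,u)$, let $q_{i,u}(t)$ be the probability that $(i,u)$ has been matched by time $t$. Then for every $t\in[0,1]$: - for every first-class-labeled edge $(i,u)$, we have $q_{i,u}(t)/x_{iu}=q_1(t)/(1-\ln 2)$; - for every second-class-labeled edge $(i,u)$, we have $q_{i,u}(t)/x_{iu}=q_2(t)/\ln 2$.
   Context: **Model.** Poisson arrival model. Each online type $i$ independently arrives according to a Poisson process of rate $\lambda_i$ on $[0,1]$. On arrival, a vertex is immediately and irrevocably matched to an unmatched offline neighbor or discarded. Each offline vertex is matched at most once. The instance is a bipartite graph $(I,J,E)$ with rates $\lambda_i>0$. **Standing assumption.** There are values $x_{ij}\ge0$ (an optimal Jaillet–Lu LP solution) with $\sum_i x_{ij}=1$ for all $j$, and each type is one of two kinds: - first-class: one neighbor $j$, with $x_{ij}=\lambda_i$; - second-class: two neighbors $j_1,j_2$, with $x_{ij_1}=x_{ij_2}=\lambda_i/2$. **Labeling.** Each edge is labeled first-class or second-class. Edges of first-class types are labeled first-class. For every $j$, the first-class-labeled edges at $j$ have total $x$-value $1-\ln2$. **Reference process.** $H$ has offline vertices $a,b$; a type of rate $2\ln2$ adjacent to both; and types of rate $1-\ln2$ adjacent only to $a$, resp. only to $b$. Algorithm RES with parameter $t_0$ works as follows: - single-neighbor arrivals are matched if their neighbor is unmatched; - a two-neighbor arrival at time $t>t_0$ with an unmatched neighbor is matched to a uniformly random unmatched neighbor. On $H$ under RES: - $f(t)$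 is the probability that a given offline vertex is matched by time $t$; - $g(t)$ is the probability that both are, and $\bar g=1-g$; - $q_1(t)$ is the probability that a particular single-neighbor edge has been matched by time $t$; - $q_2(t)$ is the same for a particular edge of the two-neighbor type. **Algorithm GEN (parameter $t_0$).** Under GEN, $g_{u,v}(t)$ is the probability that both $u$ and $v$ are matched by time $t$, and $\bar g_{u,v}=1-g_{u,v}$. Edges are used only if their offline endpoint is unmatched. - A first-class arrival is matched to its neighbor if possible. - A second-class arrival of type $i$ with neighbors $u,v$ chooses at most one edge, with disjoint probabilities: - each first-class-labeled edge $(i,u)$ with probability $1/2$; - if the arrival time is $t>t_0$, each second-class-labeled edge $(i,u)$ with probability $\bar g(t)/(2\bar g_{u,v}(t))$ if $v$ is unmatched, or $\bar g(t)/\bar g_{u,v}(t)$ if $v$ is matched. *)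

(* Defs.v *)
From HB Require Import structures.
From mathcomp Require Import all_boot all_order all_algebra.
From mathcomp Require Import all_classical all_reals all_analysis.
Set Implicit Arguments. Unset Strict Implicit. Unset Printing Implicit Defensive.
Import Order.TTheory GRing.Theory Num.Theory.
Import numFieldNormedType.Exports.
Local Open Scope classical_set_scope.
Local Open Scope ring_scope.

(* I = online types, J = offline vertices.  A state records, for each  *)
(* offline vertex j, either None (unmatched) or Some i (matched to an  *)
(* arrival of type i, i.e. via edge (i,j)).  Since arrivals are        *)
(* independent Poisson processes and the algorithms' decisions depend  *)
(* only on the arrival time, the arriving type and the current state,  *)
(* the state evolves as a continuous-time Markov jump process; its law *)
(* p t s = Pr[state at time t = s] is described by the Kolmogorov      *)
(* forward equation below.                                             *)
(* A rate function  rate s i j  is  lambda_i * Pr[an arrival of type i *)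
(* in state s is matched to j]; it is only used when j is unmatched.   *)

Definition state (I J : finType) := {ffun J -> option I}.

Definition empty_state (I J : finType) : state I J := [ffun _ => None].

Definition assign (I J : finType) (s : state I J) (j : J) (i : I) : state I J :=
  [ffun k => if k == j then Some i else s k].

Definition forward_rhs (R : realType) (I J : finType)
  (rate : state I J -> I -> J -> R) (pt : state I J -> R) (s : state I J) : R :=
  \sum_(s' : state I J) \sum_(i : I) \sum_(j : J)
     (if (s' j == None) && (assign s' j i == s) then pt s' * rate s' i j else 0)
  - pt s * \sum_(i : I) \sum_(j : J) (if s j == None then rate s i j else 0).

(* p is the law of the process on [0,1] started from the empty matching;
   rate t is the (time dependent) rate function, whose only possible
   discontinuity in time is at t0. *)
Definition is_law (R : realType) (I J : finType) (t0 : R)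
  (rate : R -> state I J -> I -> J -> R) (p : R -> state I J -> R) : Prop :=
  [/\ (forall s, p 0 s = (if s == empty_state I J then 1 else 0)),
      (forall s, {within `[0, 1], continuous (fun t => p t s)}) &
      (forall s t, 0 < t < 1 -> t != t0 ->
         is_derive t 1 (fun t => p t s) (forward_rhs (rate t) (p t) s))].

Definition edge_prob (R : realType) (I J : finType) (p : R -> state I J -> R)
  (t : R) (i : I) (u : J) : R :=
  \sum_(s : state I J | s u == Some i) p t s.

Definition both_prob (R : realType) (I J : finType) (p : R -> state I J -> R)
  (t : R) (u v : J) : R :=
  \sum_(s : state I J | (s u != None) && (s v != None)) p t s.

(* Offline vertices: 'I_2, with a = 0, b = 1.                          *)
(* Types: 'I_3, with 0 = the two-neighbour type (rate 2 ln 2),         *)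
(* 1 = single-neighbour type at a, 2 = single-neighbour type at b      *)
(* (rates 1 - ln 2).                                                   *)

Definition Ha : 'I_2 := ord0.
Definition Hb : 'I_2 := ord_max.
Definition Hboth : 'I_3 := ord0.
Definition Honly_a : 'I_3 := inord 1.
Definition Honly_b : 'I_3 := inord 2.

Definition Hother (w : 'I_2) : 'I_2 := if w == Ha then Hb else Ha.

Definition RES_rate (R : realType) (t0 : R) (t : R)
  (s : state 'I_3 'I_2) (i : 'I_3) (w : 'I_2) : R :=
  if i == Honly_a then (if w == Ha then 1 - ln 2 else 0)
  else if i == Honly_b then (if w == Hb then 1 - ln 2 else 0)
  else
    if t0 < t then
      (2 * ln 2) * (if s (Hother w) == None then 1 / 2 else 1)
    else 0.

Definition H_g (R : realType) (pH : R -> state 'I_3 'I_2 -> R) (t : R) : R :=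
  both_prob pH t Ha Hb.
Definition H_q1 (R : realType) (pH : R -> state 'I_3 'I_2 -> R) (t : R) : R :=
  edge_prob pH t Honly_a Ha.
Definition H_q2 (R : realType) (pH : R -> state 'I_3 'I_2 -> R) (t : R) : R :=
  edge_prob pH t Hboth Ha.

Definition first_class (R : realType) (I J : finType) (E : I -> J -> bool)
  (lam : I -> R) (x : I -> J -> R) (i : I) : Prop :=
  exists j, [set k | E i k] = [set j] /\ x i j = lam i.

Definition second_class (R : realType) (I J : finType) (E : I -> J -> bool)
  (lam : I -> R) (x : I -> J -> R) (i : I) : Prop :=
  exists j1 j2, [/\ j1 != j2, [set k | E i k] = [set j1; j2],
                    x i j1 = lam i / 2 & x i j2 = lam i / 2].

Definition standing_assumption (R : realType) (I J : finType)
  (E : I -> J -> bool) (lam : I -> R) (x : I -> J -> R) : Prop :=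
  [/\ (forall i, 0 < lam i),
      (forall i j, E i j -> 0 <= x i j),
      (forall j, \sum_(i | E i j) x i j = 1) &
      (forall i, first_class E lam x i \/ second_class E lam x i)].

(* lab i j = true : edge (i,j) is labelled first-class;
   lab i j = false : edge (i,j) is labelled second-class. *)
Definition valid_labeling (R : realType) (I J : finType)
  (E : I -> J -> bool) (lam : I -> R) (x : I -> J -> R)
  (lab : I -> J -> bool) : Prop :=
  (forall i j, E i j -> first_class E lam x i -> lab i j) /\
  (forall j, \sum_(i | E i j && lab i j) x i j = 1 - ln 2).

(* Algorithm GEN.  gbarH t = 1 - g(t) from the reference process,      *)
(* p is the law of GEN itself (used for g_{u,v}).                      *)
(* A type with a single neighbour is first-class; otherwise it is      *)
(* second-class with neighbours w and v (the unique neighbour v != w). *)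

Definition GEN_rate (R : realType) (I J : finType) (E : I -> J -> bool)
  (lam : I -> R) (lab : I -> J -> bool) (t0 : R)
  (pH : R -> state 'I_3 'I_2 -> R) (p : R -> state I J -> R)
  (t : R) (s : state I J) (i : I) (w : J) : R :=
  if ~~ E i w then 0
  else if #|[set k | E i k]| == 1%N then lam i
  else lam i *
    (if lab i w then 1 / 2
     else if t0 < t then
       \sum_(v | E i v && (v != w))
         (let gbar := 1 - H_g pH t in
          let gbar_wv := 1 - both_prob p t w v in
          if s v == None then gbar / (2 * gbar_wv) else gbar / gbar_wv)
     else 0).

(* Main.v *)
Require Import Defs.
From HB Require Import structures.
From mathcomp Require Import all_boot all_order all_algebra.
From mathcomp Require Import all_classical all_reals all_analysis.
From mathcomp Require Import ring lra.
Set Implicit Arguments. Unset Strict Implicit. Unset Printing Implicit Defensive.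
Import Order.TTheory GRing.Theory Num.Theory.
Import numFieldNormedType.Exports.
Local Open Scope classical_set_scope.
Local Open Scope ring_scope.

Section Basics.
Variable R : realType.

Lemma within_pt (f : R -> R) (A : set R) c : {within A, continuous f} -> A c ->
  forall e, 0 < e -> exists2 d, 0 < d & forall t, A t -> `|t - c| < d -> `|f t - f c| < e.
Proof.
move=> /subspace_continuousP cf Ac e e0.
have := cf c Ac => /cvgrPdist_lt /(_ e e0).
rewrite near_withinE => /nbhs_ballP [d /= d0 H].
exists d => // t At tc; rewrite distrC; apply: H => //.
by rewrite /ball /= distrC.
Qed.



Lemma cont_big (T : Type) (r : seq T) (P : pred T) (f : T -> R -> R) (A : set R) :
  (forall s, P s -> {within A, continuous (f s)}) ->
  {within A, continuous (fun t => \sum_(s <- r | P s) f s t)}.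
Proof.
move=> H; elim: r => [|a r IH].
  under eq_fun do rewrite big_nil.
  exact: continuous_subspaceT (@cst_continuous _ _ _).
case Pa: (P a).
  under eq_fun do rewrite big_cons Pa.
  exact: (within_continuousD (H a Pa) IH).
by under eq_fun do rewrite big_cons Pa.
Qed.

Lemma is_derive_big (T : Type) (r : seq T) (P : pred T) (f : T -> R -> R) (df : T -> R) (x : R) :
  (forall s, P s -> is_derive x (1:R) (f s) (df s)) ->
  is_derive x (1:R) (fun t => \sum_(s <- r | P s) f s t) (\sum_(s <- r | P s) df s).
Proof.
move=> H; elim: r => [|a r IH].
  rewrite big_nil; under eq_fun do rewrite big_nil.
  exact: is_derive_cst.
case Pa: (P a).
  rewrite big_cons Pa; under eq_fun do rewrite big_cons Pa.
  have := is_deriveD (H a Pa) IH; by [].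
by rewrite big_cons Pa; under eq_fun do rewrite big_cons Pa.
Qed.



Lemma sub_cc (a b c d : R) : c <= a -> b <= d -> `[a, b] `<=` `[c, d].
Proof.
move=> ca bd z /=; rewrite !in_itv /= => /andP[h1 h2].
by rewrite (le_trans ca h1) (le_trans h2 bd).
Qed.

Lemma ML0 (y : R -> R) (a b : R) : a <= b -> {within `[a,b], continuous y} ->
  (forall t, a < t < b -> exists2 d, is_derive t (1:R) y d & 0 <= d) -> y a <= y b.
Proof.
move=> ab cy H.
apply: (@ger0_derive1_ndecr R y a b) => //.
- move=> t; rewrite in_itv /= => /H [d [? _] _]; done.
- move=> t; rewrite in_itv /= => /H [d hd d0].
  by rewrite derive1E derive_val.
Qed.

Lemma ML (y : R -> R) (t0 a b : R) : a <= b -> {within `[a,b], continuous y} ->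
  (forall t, a < t < b -> t != t0 -> exists2 d, is_derive t (1:R) y d & 0 <= d) -> y a <= y b.
Proof.
move=> ab cy H.
have [/andP[at0 t0b]|nt] := boolP (a < t0 < b).
  apply: (@le_trans _ _ (y t0)).
    apply: ML0; first exact: ltW.
      exact: continuous_subspaceW (sub_cc (lexx a) (ltW t0b)) cy.
    move=> t /andP[t1 t2]; apply: H; first by rewrite t1 (lt_trans t2 t0b).
    by rewrite lt_eqF.
  apply: ML0; first exact: ltW.
    exact: continuous_subspaceW (sub_cc (ltW at0) (lexx b)) cy.
  move=> t /andP[t1 t2]; apply: H; first by rewrite t2 (lt_trans at0 t1).
  by rewrite gt_eqF.
apply: ML0 => // t tab; apply: H => //.
by apply/eqP => E; move: nt; rewrite -E tab.
Qed.


Lemma cont_lin (e a : R) (A : set R) : {within A, continuous (fun t => e * (t - a))}.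
Proof.
apply: continuous_subspaceT => x.
apply: cvgM; first exact: cvg_cst.
apply: cvgB; [exact: cvg_id | exact: cvg_cst].
Qed.

Lemma SL (y : R -> R) (t0 a b : R) : {within `[a,b], continuous y} -> 0 <= y a ->
 (forall t, a < t < b -> t != t0 -> y t < 0 -> exists2 d, is_derive t (1:R) y d & 0 <= d) ->
 forall t, a <= t <= b -> 0 <= y t.
Proof.
move=> cy ya H t1 /andP[at1 t1b].
rewrite leNgt; apply/negP => yt1.
have at1' : a < t1.
  rewrite lt_neqAle at1 andbT; apply/eqP => E; move: yt1; rewrite -E ltNge ya //.
set eps := - y t1 / (2 * (t1 - a)).
have eps0 : 0 < eps.
  by rewrite /eps divr_gt0 // ?oppr_gt0 // mulr_gt0 // subr_gt0.
set z := fun t => y t + eps * (t - a).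
have cz : {within `[a, t1], continuous z}.
  apply: within_continuousD; last exact: cont_lin.
  exact: continuous_subspaceW (sub_cc (lexx a) t1b) cy.
have ne : [set` `[a, t1]] !=set0 by exists a; rewrite /= in_itv /= lexx at1.
have [c cin cmin] := compact_EVT_min ne (@segment_compact _ a t1) cz.
rewrite inE /= in_itv /= in cin; case/andP: cin => ac ct1.
have cmin' : forall t, a <= t <= t1 -> z c <= z t.
  by move=> t tin; apply: cmin; rewrite inE /= in_itv /=.
have zt1 : z t1 < 0.
  rewrite /z; have -> : eps * (t1 - a) = - y t1 / 2.
    by rewrite /eps; field; rewrite subr_eq0 gt_eqF.
  rewrite /z.
  lra.
have ca : a < c.
  rewrite lt_neqAle ac andbT; apply/eqP => E.
  have := le_lt_trans (cmin' t1 _) zt1; rewrite -E at1 lexx /= => /(_ isT).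
  by rewrite /z subrr mulr0 addr0 ltNge ya.
have yc : y c < 0.
  have : z c < 0 by apply: le_lt_trans zt1; apply: cmin'; rewrite at1 lexx.
  have : 0 <= eps * (c - a) by apply: mulr_ge0; [exact: ltW | rewrite subr_ge0].
  rewrite /z; lra.
have cab : [set` `[a, b]] c by rewrite /= in_itv /= ac (le_trans ct1 t1b).
have yc0 : 0 < - y c by rewrite oppr_gt0.
have [d d0 Hd] := within_pt cy cab yc0.
set m := Num.min (d / 2) ((c - a) / 2).
have m0 : 0 < m by rewrite lt_min !divr_gt0 // subr_gt0.
have md : m < d by rewrite gt_min ltr_pdivrMr // ltr_pMr // ltr1n.
have mca : m < c - a.
  by rewrite gt_min orbC ltr_pdivrMr ?ltr_pMr ?ltr1n ?subr_gt0.
have yneg : forall t, c - m <= t <= c -> y t < 0.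
  move=> t /andP[t1' t2'].
  have tab : [set` `[a, b]] t.
    rewrite /= in_itv /=; apply/andP; split; lra.
  have := Hd t tab _.
  have -> : `|t - c| = c - t by rewrite distrC ger0_norm ?subr_ge0.
  move=> /(_ ltac:(lra)) /(le_lt_trans (ler_norm _)).
  lra.
have mono : y (c - m) <= y c.
  apply: (@ML y t0); first lra.
  - apply: continuous_subspaceW cy; apply: sub_cc; lra.
  - move=> t /andP[h1 h2] tt0; apply: H => //.
    + apply/andP; split; lra.
    + apply: yneg; apply/andP; split; lra.
have := cmin' (c - m) ltac:(apply/andP; split; lra).
rewrite /z.
have : 0 < eps * m by rewrite mulr_gt0.
rewrite mulrBr mulrBr; lra.
Qed.


Lemma real_ind (P : R -> Prop) :
 P 0 ->
 (forall u, 0 < u <= 1 -> (forall t, 0 <= t < u -> P t) -> P u) ->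
 (forall u, 0 <= u < 1 -> (forall t, 0 <= t <= u -> P t) ->
    exists2 d, 0 < d & forall t, u < t < u + d -> t <= 1 -> P t) ->
 forall t, 0 <= t <= 1 -> P t.
Proof.
move=> P0 Pcl Pop.
set A := [set u | 0 <= u <= 1 /\ forall t, 0 <= t <= u -> P t].
have A0 : A 0.
  split; first by rewrite lexx ler01.
  by move=> t /andP[h1 h2]; have -> : t = 0 by apply/eqP; rewrite eq_le h1 h2.
have ne : A !=set0 by exists 0.
have ub : ubound A 1 by move=> x [/andP[_ h] _].
have hs : has_sup A by split => //; exists 1.
set s := sup A.
have s0 : 0 <= s by apply: sup_upper_bound.
have s1 : s <= 1 by apply: ge_sup.
have below : forall t, 0 <= t < s -> P t.
  move=> t /andP[t0 ts].
  have ts' : 0 < s - t by rewrite subr_gt0.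
  have [e [_ He] se] := sup_adherent ts' hs.
  apply: He; apply/andP; split => //.
  by rewrite -/s in se; apply: ltW; lra.
have Ps : P s.
  have [->|sn0] := eqVneq s 0; first exact: P0.
  apply: Pcl; last exact: below.
  by rewrite s1 andbT lt_neqAle eq_sym sn0 s0.
have As : A s.
  split; first by rewrite s0 s1.
  move=> t /andP[t0 ts]; have [->|tns] := eqVneq t s; first exact: Ps.
  by apply: below; rewrite t0 lt_neqAle tns ts.
have s_eq1 : s = 1.
  apply/eqP; rewrite eq_le s1 /=; rewrite leNgt; apply/negP => s_lt1.
  have [d d0 Hd] := Pop s ltac:(by rewrite s0 s_lt1) As.2.
  set t' := Num.min (s + d / 2) 1.
  have At' : A t'.
    split.
      apply/andP; split; last by rewrite ge_min lexx orbT.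
      rewrite le_min; apply/andP; split; last by [].
      by apply: addr_ge0 => //; rewrite divr_ge0 // ltW.
    move=> t /andP[t0 tt'].
    have [ts|st] := leP t s; first by apply: As.2; rewrite t0 ts.
    have : t <= s + d / 2 /\ t <= 1.
      by move: tt'; rewrite le_min => /andP[].
    case=> h1 h2; apply: Hd => //; apply/andP; split => //.
    by apply: le_lt_trans h1 _; rewrite ltrD2l ltr_pdivrMr // ltr_pMr // ltr1n.
  have h : t' <= s by apply: sup_upper_bound.
  have h' : s < t'.
    rewrite lt_min; apply/andP; split; last by [].
    by rewrite ltrDl divr_gt0.
  lra.
move=> t /andP[t0 t1]; apply: As.2; rewrite t0 /=; by rewrite s_eq1.
Qed.


Lemma fin_delta (T : finType) (P : T -> R -> Prop) (c : R) :
  (forall x, exists2 d, 0 < d & forall t, `|t - c| < d -> P x t) ->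
  exists2 d, 0 < d & forall t, `|t - c| < d -> forall x, P x t.
Proof.
move=> H.
suff : forall r : seq T, exists2 d, 0 < d & forall t, `|t - c| < d -> forall x, x \in r -> P x t.
  by case/(_ (enum T)) => d d0 Hd; exists d => // t tc x; apply: Hd => //; rewrite mem_enum.
elim=> [|a r [d d0 Hd]]; first by exists 1 => //.
have [da da0 Ha] := H a.
exists (Num.min d da); first by rewrite lt_min d0 da0.
move=> t; rewrite lt_min => /andP[h1 h2] x; rewrite inE => /orP[/eqP ->|xr].
  exact: Ha.
exact: Hd.
Qed.

Lemma closure_ge0 (f : R -> R) u : {within `[0, 1], continuous f} -> 0 < u <= 1 ->
  (forall t, 0 <= t < u -> 0 <= f t) -> 0 <= f u.
Proof.
move=> cf /andP[u0 u1] H; rewrite leNgt; apply/negP => fu.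
have uin : [set` `[0, 1]] u by rewrite /= in_itv /= u1 ltW.
have fu' : 0 < - f u by rewrite oppr_gt0.
have [d d0 Hd] := within_pt cf uin fu'.
set t := u - Num.min d u / 2.
have m0 : 0 < Num.min d u by rewrite lt_min d0 u0.
have mle : Num.min d u <= u by rewrite ge_min lexx orbT.
have mled : Num.min d u <= d by rewrite ge_min lexx.
have tin : 0 <= t < u by apply/andP; split; rewrite /t; lra.
have := H t tin.
have tin' : [set` `[0, 1]] t by rewrite /= in_itv /=; apply/andP; split; rewrite /t; lra.
have := Hd t tin' _.
have -> : `|t - u| = Num.min d u / 2.
  rewrite /t (_ : u - _ - u = - (Num.min d u / 2)); last by ring.
  by rewrite normrN ger0_norm //; lra.
move=> /(_ ltac:(lra)) /(le_lt_trans (ler_norm _)).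
lra.
Qed.

Lemma closure_eq (f g : R -> R) u : {within `[0, 1], continuous f} ->
  {within `[0, 1], continuous g} -> 0 < u <= 1 ->
  (forall t, 0 <= t < u -> f t = g t) -> f u = g u.
Proof.
move=> cf cg uin H.
have c1 := within_continuousB cf cg.
have c2 := within_continuousB cg cf.
have h1 := closure_ge0 c1 uin.
have h2 := closure_ge0 c2 uin.
have a1 : 0 <= f u - g u by apply: h1 => t ht; change (0 <= f t - g t); rewrite (H t ht) subrr.
have a2 : 0 <= g u - f u by apply: h2 => t ht; change (0 <= g t - f t); rewrite (H t ht) subrr.
lra.
Qed.

Lemma within_contM (A : set R) (f g : R -> R) : {within A, continuous f} ->
  {within A, continuous g} -> {within A, continuous (fun t => f t * g t)}.
Proof. by move=> cf cg x; apply: cvgM; [exact: cf|exact: cg]. Qed.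

Lemma within_contB (A : set R) (f g : R -> R) : {within A, continuous f} ->
  {within A, continuous g} -> {within A, continuous (fun t => f t - g t)}.
Proof. by move=> cf cg x; apply: cvgB; [exact: cf|exact: cg]. Qed.

Lemma within_contD (A : set R) (f g : R -> R) : {within A, continuous f} ->
  {within A, continuous g} -> {within A, continuous (fun t => f t + g t)}.
Proof. by move=> cf cg x; apply: cvgD; [exact: cf|exact: cg]. Qed.

Lemma within_contC (A : set R) (c : R) : {within A, continuous (fun _ : R => c)}.
Proof. exact: continuous_subspaceT (@cst_continuous _ _ _). Qed.

Lemma is_derive_mul (f g : R -> R) (x df dg : R) : is_derive x (1:R) f df ->
  is_derive x (1:R) g dg -> is_derive x (1:R) (fun t => f t * g t) (f x * dg + g x * df).
Proof. by move=> h1 h2; have := is_deriveM h1 h2. Qed.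

Lemma is_derive_sub (f g : R -> R) (x df dg : R) : is_derive x (1:R) f df ->
  is_derive x (1:R) g dg -> is_derive x (1:R) (fun t => f t - g t) (df - dg).
Proof. by move=> h1 h2; have := is_deriveB h1 h2. Qed.

Lemma is_derive_add (f g : R -> R) (x df dg : R) : is_derive x (1:R) f df ->
  is_derive x (1:R) g dg -> is_derive x (1:R) (fun t => f t + g t) (df + dg).
Proof. by move=> h1 h2; have := is_deriveD h1 h2. Qed.

Lemma is_derive_cmul (f : R -> R) (c x df : R) : is_derive x (1:R) f df ->
  is_derive x (1:R) (fun t => c * f t) (c * df).
Proof.
move=> h; have := is_derive_mul (is_derive_cst c x (1:R)) h.
by rewrite mulr0 addr0.
Qed.

Lemma gronwall0 (S : R -> R) (C a b t0 : R) : 0 <= C -> {within `[a, b], continuous S} ->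
  S a = 0 -> (forall t, a <= t <= b -> 0 <= S t) ->
  (forall t, a < t < b -> t != t0 -> exists2 d, is_derive t (1:R) S d & d <= C * S t) ->
  forall t, a <= t <= b -> S t = 0.
Proof.
move=> C0 cS Sa Spos dS t /andP[hat tb].
set W := fun t => 0 - expR ((- C) * t) * S t.
have cexp : {within `[a, t], continuous (fun t : R => expR ((- C) * t))}.
  apply: continuous_subspaceT => x.
  apply: (@continuous_comp _ _ _ (fun t : R => (- C) * t) expR).
    by apply: cvgM; [exact: cvg_cst | exact: cvg_id].
  exact: continuous_expR.
have cW : {within `[a, t], continuous W}.
  apply: within_contB (@within_contC _ 0) (within_contM cexp _).
  exact: continuous_subspaceW (sub_cc (lexx a) tb) cS.
have := @ML W t0 a t hat cW.
have H : forall t1, a < t1 < t -> t1 != t0 -> exists2 d, is_derive t1 (1:R) W d & 0 <= d.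
  move=> t1 /andP[h1 h2] h3.
  have [d hd dle] := dS t1 ltac:(by rewrite h1 (lt_le_trans h2 tb)) h3.
  have dl : is_derive t1 (1:R) (fun t : R => (- C) * t) (- C).
    by have := is_derive_cmul (- C) (is_derive_id t1 (1:R)); rewrite mulr1.
  have de : is_derive t1 (1:R) (fun t : R => expR ((- C) * t)) (expR ((- C) * t1) * (- C)).
    exact: (is_derive1_comp (is_derive_expR _) dl).
  have := is_derive_sub (is_derive_cst (0:R) t1 (1:R)) (is_derive_mul de hd).
  move=> dd; eexists; first exact: dd.
  have e0 := expR_gt0 ((- C) * t1).
  have -> : 0 - (expR (- C * t1) * d + S t1 * (expR (- C * t1) * - C)) =
    expR (- C * t1) * (C * S t1 - d) by ring.
  by apply: mulr_ge0; [exact: ltW | rewrite subr_ge0].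
move=> /(_ H); rewrite /W Sa mulr0 subrr => h.
have e0 := expR_gt0 ((- C) * t).
have St := Spos t ltac:(by rewrite hat tb).
apply/eqP; rewrite eq_le St andbT.
have : expR (- C * t) * S t <= 0 by lra.
by rewrite pmulr_rle0.
Qed.

End Basics.

Section Proc.
Variables (R : realType) (I J : finType).
Notation st := (state I J).

Lemma sum_pick (P : pred st) (c : bool) (a : st) (X : R) :
  \sum_(s | P s) (if c && (a == s) then X else 0) = if c && P a then X else 0.
Proof.
rewrite big_mkcond /= (bigD1 a) //= eqxx andbT big1 ?addr0.
  by case: (P a); case: c.
by move=> s /negbTE sa; rewrite eq_sym sa andbF; case: (P s).
Qed.

Lemma rhs_sum (P : pred st) (rate : st -> I -> J -> R) (pt : st -> R) :
  \sum_(s | P s) forward_rhs rate pt s =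
  \sum_(s' : st) \sum_(i : I) \sum_(j : J) (if s' j == None then
      pt s' * rate s' i j * ((P (assign s' j i))%:R - (P s')%:R) else 0).
Proof.
rewrite /forward_rhs big_split /= sumrN.
rewrite (exchange_big_dep xpredT) //=.
under eq_bigr => s' _.
  rewrite (exchange_big_dep xpredT) //=.
  under eq_bigr => i _.
    rewrite (exchange_big_dep xpredT) //=.
    under eq_bigr => j _ do rewrite sum_pick.
    over.
  over.
rewrite [X in _ - X]big_mkcond /=.
rewrite [X in _ - X](eq_bigr (fun s : st => \sum_(i : I) \sum_(j : J) (if s j == None then pt s * rate s i j * (P s)%:R else 0))); last first.
  move=> s _; case: (P s) => /=.
    rewrite mulr_sumr; apply: eq_bigr => i _; rewrite mulr_sumr; apply: eq_bigr => j _.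
    by case: (s j == None) => /=; rewrite ?mulr1 ?mulr0.
  rewrite big1 // => i _; rewrite big1 // => j _.
  by case: (s j == None); rewrite ?mulr0.
rewrite -sumrB; apply: eq_bigr => s _.
rewrite -sumrB; apply: eq_bigr => i _.
rewrite -sumrB; apply: eq_bigr => j _.
rewrite !andbT.
by case: (s j == None); case: (P s); case: (P (assign s j i)) => /=; rewrite ?subrr //; ring.
Qed.



Lemma const0 (y : R -> R) (t0 : R) :
  {within `[0, 1], continuous y} ->
  (forall t, 0 < t < 1 -> t != t0 -> is_derive t (1:R) y 0) ->
  forall t, 0 <= t <= 1 -> y t = y 0.
Proof.
move=> cy dy t /andP[t0' tle1].
have cy' : {within `[0, t], continuous y}.
  by apply: continuous_subspaceW cy; apply: sub_cc.
apply/eqP; rewrite eq_le; apply/andP; split.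
  have cny : {within `[0, t], continuous (fun t => 0 - y t)}.
    apply: within_continuousB => //; exact: continuous_subspaceT (@cst_continuous _ _ _).
  have := @ML R (fun t => 0 - y t) t0 0 t t0' cny.
  have H : forall t1, 0 < t1 < t -> t1 != t0 ->
     exists2 d, is_derive t1 (1:R) (fun t => 0 - y t) d & 0 <= d.
    move=> t1 /andP[h1 h2] h3; exists (0 - 0); last by rewrite subrr.
    have hd : is_derive t1 (1:R) y 0 by apply: dy => //; rewrite h1 (lt_le_trans h2 tle1).
    exact: (is_deriveB (is_derive_cst (0:R) t1 (1:R)) hd).
  move=> /(_ H); lra.
apply: (@ML R y t0 0 t t0' cy') => t1 /andP[h1 h2] h3; exists 0 => //.
by apply: dy => //; rewrite h1 (lt_le_trans h2 tle1).
Qed.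

Definition cnt (s : st) := #|[pred j | s j != None]|.

Lemma cnt_assign (s : st) j i : s j == None -> cnt (assign s j i) = (cnt s).+1.
Proof.
move=> sj; rewrite /cnt (cardD1 j) inE /assign ffunE eqxx /= add1n; congr S.
apply: eq_card => k; rewrite !inE ffunE.
case: (eqVneq k j) => [->|kj] //=.
by rewrite (eqP sj).
Qed.

Lemma sum_if_eq (T : finType) (u : T) (X : T -> R) :
  \sum_(j : T) (if j == u then X j else 0) = X u.
Proof. by rewrite -big_mkcond big_pred1_eq. Qed.

Lemma pair_id (pt : st -> R) (u v : J) :
  \sum_(s : st | s u == None) pt s * (if s v == None then 1 else 2) =
  \sum_(s : st | s u == None) pt s + (\sum_(s : st) pt s - \sum_(s : st | s v == None) pt s
     - \sum_(s : st | (s u != None) && (s v != None)) pt s).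
Proof.
rewrite !(big_mkcond (fun s : st => s u == None)) (big_mkcond (fun s : st => s v == None)).
rewrite (big_mkcond (fun s : st => (s u != None) && (s v != None))) /=.
rewrite -!sumrB -big_split /=; apply: eq_bigr => s _.
case: (s u == None); case: (s v == None) => /=; ring.
Qed.

Lemma pair_ge (pt : st -> R) (u v : J) : (forall s, 0 <= pt s) ->
  \sum_(s : st | s u == None) pt s <=
  \sum_(s : st) pt s - \sum_(s : st | (s u != None) && (s v != None)) pt s.
Proof.
move=> H; rewrite -subr_ge0.
rewrite (big_mkcond (fun s : st => s u == None)) (big_mkcond (fun s : st => (s u != None) && (s v != None))) /=.
rewrite -!sumrB; apply: sumr_ge0 => s _.
have := H s; case: (s u == None); case: (s v == None) => /= h; lra.
Qed.

Lemma sub_le (pt : st -> R) (P : pred st) : (forall s, 0 <= pt s) ->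
  \sum_(s : st | P s) pt s <= \sum_(s : st) pt s.
Proof.
move=> H; rewrite [X in _ <= X](bigID P) /= lerDl; apply: sumr_ge0 => s _; exact: H.
Qed.

Section Law.
Variables (t0 : R) (rate : R -> st -> I -> J -> R) (p : R -> st -> R).
Hypothesis law : is_law t0 rate p.

Lemma cont_P (P : pred st) : {within `[0, 1], continuous (fun t => \sum_(s | P s) p t s)}.
Proof. by case: law => _ c _; apply: cont_big => s _; apply: c. Qed.

Lemma deriv_P (P : pred st) t : 0 < t < 1 -> t != t0 ->
  is_derive t (1:R) (fun t => \sum_(s | P s) p t s)
   (\sum_(s' : st) \sum_(i : I) \sum_(j : J) (if s' j == None then
      p t s' * rate t s' i j * ((P (assign s' j i))%:R - (P s')%:R) else 0)).
Proof.
move=> tin tt0; rewrite -rhs_sum; apply: is_derive_big => s _.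
by case: law => _ _ d; apply: d.
Qed.

Lemma mass1 t : 0 <= t <= 1 -> \sum_(s : st) p t s = 1.
Proof.
move=> tin.
have -> : 1 = \sum_(s : st) p 0 s.
  case: law => init _ _; under eq_bigr do rewrite init.
  rewrite (bigD1 (empty_state I J)) //= eqxx big1 ?addr0 // => s /negbTE -> //.
apply: (@const0 (fun t => \sum_(s : st) p t s) t0 _ _ t tin).
  exact (@cont_P xpredT).
move=> t1 t1in t1t0; have := @deriv_P xpredT t1 t1in t1t0.
move=> H; apply: (is_derive_eq H); apply: big1 => s _; apply: big1 => i _; apply: big1 => j _.
by rewrite subrr mulr0; case: ifP.
Qed.


Lemma init_sum (P : pred st) : \sum_(s : st | P s) p 0 s = (P (empty_state I J))%:R.
Proof.
case: law => init _ _; under eq_bigr do rewrite init.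
rewrite -big_mkcondr /=.
case: (boolP (P (empty_state I J))) => h.
  by rewrite (big_pred1 (empty_state I J)) // => s /=; rewrite andbC; case: eqP => // ->.
by rewrite big_pred0 // => s; apply/negP => /andP[Ps /eqP E]; move: h; rewrite -E Ps.
Qed.

Lemma LP a b : 0 <= a -> b <= 1 ->
  (forall t, a < t < b -> t != t0 -> forall (s : st) i j, s j == None -> 0 <= rate t s i j) ->
  (forall s : st, 0 <= p a s) -> forall t, a <= t <= b -> forall s : st, 0 <= p t s.
Proof.
move=> a0 b1 rpos pa t tin s.
suff H : forall n s, (cnt s < n)%N -> forall t, a <= t <= b -> 0 <= p t s.
  exact: (H (cnt s).+1).
elim=> [//|n IH] {}s hs {}t {}tin.
case: law => _ cont der.
apply: (@SL R (fun t => p t s) t0 a b) => //.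
- by apply: continuous_subspaceW (cont s); apply: sub_cc.
- move=> t1 /andP[h1 h2] h3 yneg; exists (forward_rhs (rate t1) (p t1) s).
    apply: der => //; apply/andP; split; lra.
  rewrite /forward_rhs.
  have Hin : 0 <= \sum_(s' : st) \sum_(i : I) \sum_(j : J)
     (if (s' j == None) && (assign s' j i == s) then p t1 s' * rate t1 s' i j else 0).
    apply: sumr_ge0 => s' _; apply: sumr_ge0 => i _; apply: sumr_ge0 => j _.
    case: ifP => // /andP[sj /eqP as'].
    apply: mulr_ge0; last by apply: rpos => //; rewrite h1.
    apply: IH; last by rewrite !ltW.
    by move: hs; rewrite -as' cnt_assign.
  have Hout : 0 <= \sum_(i : I) \sum_(j : J) (if s j == None then rate t1 s i j else 0).
    apply: sumr_ge0 => i _; apply: sumr_ge0 => j _.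
    by case: ifP => // sj; apply: rpos => //; rewrite h1.
  have : p t1 s * \sum_(i : I) \sum_(j : J) (if s j == None then rate t1 s i j else 0) <= 0.
    by apply: mulr_le0_ge0 => //; rewrite ltW.
  lra.
Qed.


Lemma deriv_edge (i0 : I) (u : J) t : 0 < t < 1 -> t != t0 ->
  is_derive t (1:R) (fun t => \sum_(s : st | s u == Some i0) p t s)
   (\sum_(s : st | s u == None) p t s * rate t s i0 u).
Proof.
move=> tin tt0; have := @deriv_P (fun s => s u == Some i0) t tin tt0.
move=> H; apply: (is_derive_eq H).
rewrite [RHS]big_mkcond /=; apply: eq_bigr => s _.
rewrite (eq_bigr (fun i => if i == i0 then (if s u == None then p t s * rate t s i0 u else 0) else 0)).
  by rewrite sum_if_eq.
move=> i _.
rewrite (eq_bigr (fun j => if j == u then (if i == i0 then (if s u == None then p t s * rate t s i0 u else 0) else 0) else 0)).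
  by rewrite sum_if_eq.
move=> j _; rewrite /assign ffunE.
case: (eqVneq j u) => [->|ju]; rewrite ?eqxx.
  case: (eqVneq (s u) None) => [->|] /=; last by case: (i == i0).
  case: (eqVneq i i0) => [->|ii0]; first by rewrite eqxx /= subr0 mulr1.
  by rewrite (_ : (Some i == Some i0) = false) ?subrr ?mulr0 //; apply/eqP => -[] /eqP; rewrite (negbTE ii0).
by rewrite subrr mulr0; case: ifP.
Qed.

Lemma deriv_unm (u : J) t : 0 < t < 1 -> t != t0 ->
  is_derive t (1:R) (fun t => \sum_(s : st | s u == None) p t s)
   (- \sum_(i : I) \sum_(s : st | s u == None) p t s * rate t s i u).
Proof.
move=> tin tt0; have := @deriv_P (fun s => s u == None) t tin tt0.
move=> H; apply: (is_derive_eq H).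
have -> : \sum_(i : I) \sum_(s : st | s u == None) p t s * rate t s i u =
   \sum_(s : st) \sum_(i : I) (if s u == None then p t s * rate t s i u else 0).
  rewrite (exchange_big_dep (fun s : st => s u == None)) //= big_mkcond /=.
  apply: eq_bigr => s _; case: ifP => h; last by rewrite big1 // => i _; rewrite h.
  by rewrite big_mkcond /=; apply: eq_bigr => i _; rewrite h.
rewrite -sumrN; apply: eq_bigr => s _.
rewrite -sumrN; apply: eq_bigr => i _.
rewrite (eq_bigr (fun j => if j == u then (if s u == None then - (p t s * rate t s i u) else 0) else 0)).
  by rewrite sum_if_eq; case: ifP; rewrite ?oppr0.
move=> j _; rewrite /assign ffunE.
case: (eqVneq j u) => [->|ju]; rewrite ?eqxx.
  case: ifP => // h; rewrite h; have -> : (Some i == None) = false by []. by rewrite /= sub0r mulrN1.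
by rewrite subrr mulr0; case: ifP.
Qed.

End Law.
End Proc.

Section Consts.
Variable R : realType.

Lemma eqW (a b : R) : a = b -> a <= b. Proof. by move=> ->. Qed.

Lemma ln2_gt0 : 0 < ln (2 : R).
Proof. by apply: ln_gt0; rewrite ltr1n. Qed.

Lemma ln2_lt1 : ln (2 : R) < 1.
Proof.
have e2 : (2 : R) < expR 1.
  have := @expR_gt1Dx R 1 (oner_neq0 _); by rewrite (_ : 1 + 1 = 2).
have := e2; rewrite -{2}(expRK 1) => h.
rewrite -[X in _ < X](expRK 1).
by rewrite ltr_ln // posrE ?expR_gt0.
Qed.

Lemma Ha_Hb : (Ha == Hb) = false. Proof. by []. Qed.
Lemma Hoa_Hb : (Honly_a == Hboth) = false. Proof. by apply/eqP => /(congr1 val); rewrite /= inordK. Qed.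
Lemma Hob_Hb : (Honly_b == Hboth) = false. Proof. by apply/eqP => /(congr1 val); rewrite /= inordK. Qed.
Lemma Hoa_Hob : (Honly_a == Honly_b) = false. Proof. by apply/eqP => /(congr1 val); rewrite /= !inordK. Qed.

Lemma sum_I3 (F : 'I_3 -> R) : \sum_(i : 'I_3) F i = F Hboth + F Honly_a + F Honly_b.
Proof.
rewrite !big_ord_recl big_ord0 addr0 addrA; congr (_ + _ + _); congr F; apply: val_inj => //=; rewrite inordK //.
Qed.

End Consts.

Definition cc (R : realType) (t0 t : R) : R := if t0 < t then 1 else 0.

Section HProc.
Variables (R : realType) (t0 : R) (pH : R -> state 'I_3 'I_2 -> R).
Hypothesis lawH : is_law t0 (RES_rate t0) pH.
Notation stH := (state 'I_3 'I_2).

Definition hA t := \sum_(s : stH | s Ha == None) pH t s.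
Definition hB t := \sum_(s : stH | s Hb == None) pH t s.
Definition gH t := H_g pH t.

Lemma gH_sym t : gH t = \sum_(s : stH | (s Hb != None) && (s Ha != None)) pH t s.
Proof. by rewrite /gH /H_g /both_prob; apply: eq_bigl => s; rewrite andbC. Qed.

Lemma rH_oa_a t : \sum_(s : stH | s Ha == None) pH t s * RES_rate t0 t s Honly_a Ha = (1 - ln 2) * hA t.
Proof. by rewrite /hA mulr_sumr; apply: eq_bigr => s _; rewrite /RES_rate eqxx mulrC. Qed.

Lemma rH_ob_a t : \sum_(s : stH | s Ha == None) pH t s * RES_rate t0 t s Honly_b Ha = 0.
Proof. by apply: big1 => s _; rewrite /RES_rate eq_sym Hoa_Hob eqxx Ha_Hb mulr0. Qed.

Lemma rH_both_a t : 0 <= t <= 1 -> \sum_(s : stH | s Ha == None) pH t s * RES_rate t0 t s Hboth Ha =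
  cc t0 t * ln 2 * (hA t + (1 - hB t - gH t)).
Proof.
move=> tin.
rewrite /RES_rate eq_sym Hoa_Hb eq_sym Hob_Hb /cc /Hother eqxx.
case: ifP => _; last by rewrite !mul0r; apply: big1 => s _; rewrite mulr0.
have -> : \sum_(s : stH | s Ha == None) pH t s * (2 * ln 2 * (if s Hb == None then 1 / 2 else 1)) =
   ln 2 * \sum_(s : stH | s Ha == None) pH t s * (if s Hb == None then 1 else 2).
  by rewrite mulr_sumr; apply: eq_bigr => s _; case: ifP => _; field.
rewrite pair_id (mass1 lawH tin) /hA /hB /gH /H_g /both_prob; ring.
Qed.

Lemma rH_oa_b t : \sum_(s : stH | s Hb == None) pH t s * RES_rate t0 t s Honly_a Hb = 0.
Proof. by apply: big1 => s _; rewrite /RES_rate eqxx eq_sym Ha_Hb mulr0. Qed.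

Lemma rH_ob_b t : \sum_(s : stH | s Hb == None) pH t s * RES_rate t0 t s Honly_b Hb = (1 - ln 2) * hB t.
Proof. by rewrite /hB mulr_sumr; apply: eq_bigr => s _; rewrite /RES_rate eq_sym Hoa_Hob eqxx mulrC. Qed.

Lemma rH_both_b t : 0 <= t <= 1 -> \sum_(s : stH | s Hb == None) pH t s * RES_rate t0 t s Hboth Hb =
  cc t0 t * ln 2 * (hB t + (1 - hA t - gH t)).
Proof.
move=> tin.
rewrite /RES_rate eq_sym Hoa_Hb eq_sym Hob_Hb /cc /Hother eq_sym Ha_Hb.
case: ifP => _; last by rewrite !mul0r; apply: big1 => s _; rewrite mulr0.
have -> : \sum_(s : stH | s Hb == None) pH t s * (2 * ln 2 * (if s Ha == None then 1 / 2 else 1)) =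
   ln 2 * \sum_(s : stH | s Hb == None) pH t s * (if s Ha == None then 1 else 2).
  by rewrite mulr_sumr; apply: eq_bigr => s _; case: ifP => _; field.
rewrite pair_id (mass1 lawH tin) /hA /hB gH_sym; ring.
Qed.


Lemma dhA t : 0 < t < 1 -> t != t0 ->
  is_derive t (1:R) hA (- ((1 - ln 2) * hA t + cc t0 t * ln 2 * (hA t + (1 - hB t - gH t)))).
Proof.
move=> tin tt0; have := deriv_unm lawH Ha tin tt0.
move=> H; apply: (is_derive_eq H); congr (- _).
have tin' : 0 <= t <= 1 by case/andP: tin => a b; rewrite !ltW.
by rewrite sum_I3 rH_both_a // rH_oa_a rH_ob_a addr0 addrC.
Qed.

Lemma dhB t : 0 < t < 1 -> t != t0 ->
  is_derive t (1:R) hB (- ((1 - ln 2) * hB t + cc t0 t * ln 2 * (hB t + (1 - hA t - gH t)))).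
Proof.
move=> tin tt0; have := deriv_unm lawH Hb tin tt0.
move=> H; apply: (is_derive_eq H); congr (- _).
have tin' : 0 <= t <= 1 by case/andP: tin => a b; rewrite !ltW.
by rewrite sum_I3 rH_both_b // rH_oa_b rH_ob_b addr0 addrC.
Qed.

Lemma posH t s : 0 <= t <= 1 -> 0 <= pH t s.
Proof.
move=> tin; apply: (LP lawH (lexx 0) (lexx 1)) => //.
  move=> t1 _ _ s1 i j _; rewrite /RES_rate.
  have l1 := @ln2_lt1 R; have l0 := @ln2_gt0 R.
  case: ifP => _; first by case: ifP => _; lra.
  case: ifP => _; first by case: ifP => _; lra.
  case: ifP => _ //; case: ifP => _; lra.
by move=> s1; case: lawH => -> _ _; case: ifP.
Qed.

Lemma cont_hA : {within `[0, 1], continuous hA}.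
Proof. exact: (cont_P lawH). Qed.
Lemma cont_hB : {within `[0, 1], continuous hB}.
Proof. exact: (cont_P lawH). Qed.

Lemma hA0 : hA 0 = 1.
Proof. by rewrite /hA (init_sum lawH (fun s : stH => s Ha == None)) /= ffunE eqxx. Qed.
Lemma hB0 : hB 0 = 1.
Proof. by rewrite /hB (init_sum lawH (fun s : stH => s Hb == None)) /= ffunE eqxx. Qed.

Lemma cc01 t : 0 <= cc t0 t <= 1.
Proof. by rewrite /cc; case: ifP => _; rewrite ?lexx ?ler01. Qed.

Lemma eAB t : 0 <= t <= 1 -> hB t = hA t.
Proof.
move=> tin; case/andP: (tin) => t0' t1.
set e := fun t => hB t - hA t.
have ce : {within `[0,1], continuous e} := within_contB cont_hB cont_hA.
have cz : {within `[0,t], continuous (fun t => 0 - e t * e t)}.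
  apply: continuous_subspaceW (sub_cc (lexx 0) t1) _.
  exact: within_contB (@within_contC R _ 0) (within_contM ce ce).
have := @ML R (fun t => 0 - e t * e t) t0 0 t t0' cz.
have l1 := @ln2_lt1 R; have l0 := @ln2_gt0 R.
have H : forall t1, 0 < t1 < t -> t1 != t0 ->
   exists2 d, is_derive t1 (1:R) (fun t => 0 - e t * e t) d & 0 <= d.
  move=> t2 /andP[h1 h2] h3.
  have t2in : 0 < t2 < 1 by rewrite h1 (lt_le_trans h2 t1).
  have de := is_derive_sub (dhB t2in h3) (dhA t2in h3).
  have := is_derive_sub (is_derive_cst (0:R) t2 (1:R)) (is_derive_mul de de).
  move=> d; eexists; first exact: d.
  rewrite -/(e t2).
  set k := (1 - ln 2 + 2 * cc t0 t2 * ln 2).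
  have k0 : 0 <= k by have := cc01 t2; rewrite /k; move=> /andP[c0 c1];
    have := mulr_ge0 c0 (ltW l0); lra.
  have -> : 0 - (e t2 * (- ((1 - ln 2) * hB t2 + cc t0 t2 * ln 2 * (hB t2 + (1 - hA t2 - gH t2))) -
        - ((1 - ln 2) * hA t2 + cc t0 t2 * ln 2 * (hA t2 + (1 - hB t2 - gH t2)))) +
      e t2 * (- ((1 - ln 2) * hB t2 + cc t0 t2 * ln 2 * (hB t2 + (1 - hA t2 - gH t2))) -
        - ((1 - ln 2) * hA t2 + cc t0 t2 * ln 2 * (hA t2 + (1 - hB t2 - gH t2))))) =
     2 * k * (e t2 * e t2) by rewrite /k /e; ring.
  by apply: mulr_ge0; [apply: mulr_ge0 | rewrite -expr2 sqr_ge0].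
move=> /(_ H); rewrite /e hA0 hB0 subrr mulr0 subrr => h.
have : (hB t - hA t) * (hB t - hA t) = 0.
  apply/eqP; rewrite eq_le; apply/andP; split; first lra.
  by rewrite -expr2 sqr_ge0.
by move/eqP; rewrite mulf_eq0 orbb subr_eq0 => /eqP.
Qed.

Lemma gH_ge0 t : 0 <= t <= 1 -> 0 <= gH t.
Proof. by move=> tin; apply: sumr_ge0 => s _; apply: posH. Qed.

Lemma gH_le1 t : 0 <= t <= 1 -> gH t <= 1.
Proof.
move=> tin; rewrite -(mass1 lawH tin); apply: sub_le => s; exact: posH.
Qed.

Lemma hA_ge0 t : 0 <= t <= 1 -> 0 <= hA t.
Proof. by move=> tin; apply: sumr_ge0 => s _; apply: posH. Qed.

Lemma XA_le t : 0 <= t <= 1 -> 0 <= hA t + (1 - hB t - gH t) <= 2 * hA t.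
Proof.
move=> tin.
have -> : hA t + (1 - hB t - gH t) =
   \sum_(s : stH | s Ha == None) pH t s * (if s Hb == None then 1 else 2).
  by rewrite pair_id (mass1 lawH tin).
apply/andP; split.
  apply: sumr_ge0 => s _; have := @posH t s tin; case: ifP => _ h; lra.
rewrite /hA mulr_sumr; apply: ler_sum => s _.
have := @posH t s tin; case: ifP => _ h; lra.
Qed.

Lemma hA_pos t : 0 <= t <= 1 -> 0 < hA t.
Proof.
move=> tin; case/andP: (tin) => t0' t1.
set z := fun t => expR (2 * t) * hA t.
have cexp : {within `[0,1], continuous (fun t : R => expR (2 * t))}.
  apply: continuous_subspaceT => x.
  apply: (@continuous_comp _ _ _ (fun t : R => 2 * t) expR).
    by apply: cvgM; [exact: cvg_cst | exact: cvg_id].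
  exact: continuous_expR.
have cz : {within `[0,t], continuous z}.
  apply: continuous_subspaceW (sub_cc (lexx 0) t1) _.
  exact: within_contM cexp cont_hA.
have := @ML R z t0 0 t t0' cz.
have l1 := @ln2_lt1 R; have l0 := @ln2_gt0 R.
have H : forall t1, 0 < t1 < t -> t1 != t0 ->
   exists2 d, is_derive t1 (1:R) z d & 0 <= d.
  move=> t2 /andP[h1 h2] h3.
  have t2in : 0 < t2 < 1 by rewrite h1 (lt_le_trans h2 t1).
  have t2in' : 0 <= t2 <= 1 by rewrite !ltW // (lt_le_trans h2 t1).
  have dl : is_derive t2 (1:R) (fun t : R => 2 * t) 2.
    by have := is_derive_cmul (2:R) (is_derive_id t2 (1:R)); rewrite mulr1.
  have de : is_derive t2 (1:R) (fun t : R => expR (2 * t)) (expR (2 * t2) * 2).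
    exact: (is_derive1_comp (is_derive_expR _) dl).
  have := is_derive_mul de (dhA t2in h3).
  move=> d; eexists; first exact: d.
  have := XA_le t2in'; have := hA_ge0 t2in'; have := cc01 t2; have := expR_gt0 (2 * t2).
  set E := expR (2 * t2); set X := hA t2 + _; set a := hA t2; set c := cc t0 t2.
  move=> E0 /andP[c0 c1] a0 /andP[X0 X1].
  have : c * X <= X by rewrite ler_piMl.
  move=> cX.
  have : ln 2 * (c * X) <= ln 2 * (2 * a) by rewrite ler_pM2l //; lra.
  move=> h.
  have la : ln 2 * a <= a by rewrite ler_piMl //; lra.
  have -> : E * - ((1 - ln 2) * a + c * ln 2 * X) + a * (E * 2) =
     E * (2 * a - (1 - ln 2) * a - ln 2 * (c * X)) by ring.
  apply: mulr_ge0; lra.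
move=> /(_ H); rewrite /z mulr0 expR0 hA0 mul1r => h.
rewrite ltNge; apply/negP => ha.
have : expR (2 * t) * hA t <= 0 by rewrite pmulr_rle0 ?expR_gt0.
lra.
Qed.

End HProc.

Lemma cardE_cls (J : finType) (e : J -> bool) : #|[set k | e k]| = #|[pred k | e k]|.
Proof. apply: eq_card => k; rewrite !inE /=. apply/asboolP/idP => //. Qed.
Lemma setE1 (J : finType) (e : J -> bool) j : [set k | e k] = [set j] -> forall k, e k = (k == j).
Proof. move=> H k; have := congr1 (fun A => A k) H => /= h. apply/idP/eqP; [by move=> ek; rewrite -h | by move=> kj; rewrite h]. Qed.
Lemma setE2 (J : finType) (e : J -> bool) j1 j2 : [set k | e k] = [set j1; j2] -> forall k, e k = (k == j1) || (k == j2).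
Proof. move=> H k; have := congr1 (fun A => A k) H => /= h. apply/idP/orP.
 - by move=> ek; move: ek; rewrite h; case=> ->; rewrite eqxx; [left|right].
 - by case=> /eqP kj; rewrite h; [left|right].
Qed.

Section GEN.
Variables (R : realType) (I J : finType) (E : I -> J -> bool) (lam : I -> R)
  (x : I -> J -> R) (lab : I -> J -> bool) (t0 : R)
  (pH : R -> state 'I_3 'I_2 -> R) (p : R -> state I J -> R).
Hypotheses (SA : standing_assumption E lam x) (VL : valid_labeling E lam x lab)
  (lawH : is_law t0 (RES_rate t0) pH) (lawG : is_law t0 (GEN_rate E lam lab t0 pH p) p).
Notation st := (state I J).
Notation rG := (GEN_rate E lam lab t0 pH p).

Definition gbar t := 1 - H_g pH t.
Definition GG u v t := 1 - both_prob p t u v.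

Definition oth i u := odflt u [pick v | E i v && (v != u)].

Lemma oth_eq i u v : (forall k, (E i k && (k != u)) = (k == v)) -> oth i u = v.
Proof.
move=> Hv; rewrite /oth; case: pickP => [k|] /=; first by rewrite Hv => /eqP.
by move=> /(_ v); rewrite Hv eqxx.
Qed.

Lemma edge_info i u : E i u ->
  (lab i u /\ forall t s, rG t s i u = x i u) \/
  (~~ lab i u /\ [/\ oth i u != u, E i (oth i u), x i u = lam i / 2 &
     forall t s, rG t s i u = lam i * (cc t0 t * (if s (oth i u) == None then gbar t / (2 * GG u (oth i u) t) else gbar t / GG u (oth i u) t))]).
Proof.
move=> Eiu; case: SA => _ _ _ /(_ i) [fc|sc].
  left; have lb : lab i u by case: VL => h _; apply: h.
  case: (fc) => j [Hs xj].
  have Ek := setE1 Hs; have uj : u = j by apply/eqP; rewrite -Ek.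
  split => // t s; rewrite /GEN_rate Eiu /= cardE_cls.
  have -> : #|[pred k | E i k]| = 1%N by rewrite (eq_card Ek) card1.
  by rewrite eqxx uj xj.
case: (sc) => j1 [j2 [j12 Hs x1 x2]].
have Ek := setE2 Hs.
have c2 : #|[set k | E i k]| == 1%N = false.
  by rewrite cardE_cls (eq_card Ek) card2 j12.
have xu : x i u = lam i / 2.
  by move: Eiu; rewrite Ek => /orP[] /eqP ->.
case: (boolP (lab i u)) => lb.
  left; split => // t s; rewrite /GEN_rate Eiu /= c2 lb xu; by rewrite mul1r.
right; split => //.
have [v [vu Ev Hv]] : exists v, [/\ v != u, E i v & forall k, (E i k && (k != u)) = (k == v)].
  move: Eiu; rewrite Ek => /orP[] /eqP ->.
    exists j2; split; [by rewrite eq_sym | by rewrite Ek eqxx orbT |].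
    by move=> k; rewrite Ek; case: (eqVneq k j1) => [->|]; rewrite ?(negbTE j12) ?andbF ?andbT ?eqxx //= eq_sym.
  exists j1; split; [by [] | by rewrite Ek eqxx |].
  move=> k; rewrite Ek; case: (eqVneq k j2) => [->|]; rewrite ?andbF ?andbT ?orbF //.
  by rewrite eq_sym (negbTE j12).
rewrite (oth_eq Hv); split => // t s.
rewrite /GEN_rate Eiu /= c2 (negbTE lb) /cc.
rewrite (eq_bigl _ _ Hv) big_pred1_eq.
by case: ifP => _; rewrite ?mul1r ?mul0r.
Qed.

Definition hG u t := \sum_(s : st | s u == None) p t s.

Lemma sum_lab i u t : E i u -> lab i u ->
  \sum_(s : st | s u == None) p t s * rG t s i u = x i u * hG u t.
Proof.
move=> Eiu lb; case: (edge_info Eiu) => [[_ H]|[lb' _]]; last by rewrite lb in lb'.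
by rewrite /hG mulr_sumr; apply: eq_bigr => s _; rewrite H mulrC.
Qed.

Lemma sum_nlab i u t : 0 <= t <= 1 -> E i u -> ~~ lab i u ->
  \sum_(s : st | s u == None) p t s * rG t s i u =
  x i u * cc t0 t * (gbar t / GG u (oth i u) t) *
    (GG u (oth i u) t + hG u t - hG (oth i u) t).
Proof.
move=> tin Eiu lb; case: (edge_info Eiu) => [[lb' _]|[_ [_ _ xu H]]]; first by rewrite lb' in lb.
have -> : \sum_(s : st | s u == None) p t s * rG t s i u =
  x i u * cc t0 t * (gbar t / GG u (oth i u) t) *
  \sum_(s : st | s u == None) p t s * (if s (oth i u) == None then 1 else 2).
  rewrite mulr_sumr; apply: eq_bigr => s _; rewrite H xu invfM.
  case: ifP => _; set Gi := (GG u (oth i u) t)^-1; first ring. field.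
  by [].
rewrite pair_id (mass1 lawG tin) /hG /GG /both_prob; ring.
Qed.

Lemma x_sum_lab u : \sum_(i | E i u && lab i u) x i u = 1 - ln 2.
Proof. by case: VL. Qed.

Lemma x_sum_nlab u : \sum_(i | E i u && ~~ lab i u) x i u = ln 2.
Proof.
case: SA => _ _ H _; have := H u; rewrite (bigID (fun i => lab i u)) /= x_sum_lab.
lra.
Qed.

Lemma x_ge0 i u : E i u -> 0 <= x i u.
Proof. by case: SA => _ h _ _; apply: h. Qed.

Lemma out_sum u t : 0 <= t <= 1 ->
  \sum_(i : I) \sum_(s : st | s u == None) p t s * rG t s i u =
  (1 - ln 2) * hG u t + \sum_(i | E i u && ~~ lab i u)
     x i u * cc t0 t * (gbar t / GG u (oth i u) t) * (GG u (oth i u) t + hG u t - hG (oth i u) t).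
Proof.
move=> tin.
rewrite (bigID (fun i => E i u)) /= [X in _ + X]big1 ?addr0; last first.
  move=> i /negbTE Eiu; apply: big1 => s _; by rewrite /GEN_rate Eiu /= mulr0.
rewrite (bigID (fun i => lab i u)) /=.
rewrite (eq_bigr (fun i => x i u * hG u t)); last first.
  by move=> i /andP[Eiu lb]; apply: sum_lab.
rewrite -mulr_suml x_sum_lab; congr (_ + _); apply: eq_bigr => i /andP[Eiu lb].
exact: sum_nlab.
Qed.

Lemma oth_neq i u : E i u -> ~~ lab i u -> oth i u != u.
Proof.
move=> Eiu lb; case: (edge_info Eiu) => [[lb' _]|[_ [h _ _ _]]] //.
by rewrite lb' in lb.
Qed.

Lemma sq_le_sum (d : J -> R) v : d v * d v <= \sum_(w : J) d w * d w.
Proof.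
rewrite (bigD1 v) //= lerDl; apply: sumr_ge0 => w _; by rewrite -expr2 sqr_ge0.
Qed.

Lemma dS_bound t eta : 0 <= t <= 1 -> 0 < eta ->
  (forall u v, u != v -> eta <= GG u v t) -> hB pH t = hA pH t -> 0 <= gbar t <= 1 ->
  \sum_(u : J) ((hG u t - hA pH t) *
      (- (\sum_(i : I) \sum_(s : st | s u == None) p t s * rG t s i u) -
       - ((1 - ln 2) * hA pH t + cc t0 t * ln 2 * (hA pH t + (1 - hB pH t - gH pH t)))) +
    (hG u t - hA pH t) *
      (- (\sum_(i : I) \sum_(s : st | s u == None) p t s * rG t s i u) -
       - ((1 - ln 2) * hA pH t + cc t0 t * ln 2 * (hA pH t + (1 - hB pH t - gH pH t)))))
  <= (#|J|%:R / eta) * \sum_(u : J) (hG u t - hA pH t) * (hG u t - hA pH t).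
Proof.
move=> tin eta0 HG hBA /andP[g0 g1].
set d := fun w => hG w t - hA pH t.
set S := \sum_(u : J) (hG u t - hA pH t) * (hG u t - hA pH t).
have S0 : 0 <= S by apply: sumr_ge0 => w _; rewrite -expr2 sqr_ge0.
have dS : forall v, d v * d v <= S by move=> v; apply: (sq_le_sum d v).
have l1 := @ln2_lt1 R; have l0 := @ln2_gt0 R.
have c01 := cc01 t0 t; case/andP: c01 => c0 c1.
set k := fun i u => x i u * cc t0 t * (gbar t / GG u (oth i u) t).
have E1 : forall u, - (\sum_(i : I) \sum_(s : st | s u == None) p t s * rG t s i u) -
       - ((1 - ln 2) * hA pH t + cc t0 t * ln 2 * (hA pH t + (1 - hB pH t - gH pH t))) =
     - (1 - ln 2) * d u - \sum_(i | E i u && ~~ lab i u) k i u * (d u - d (oth i u)).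
  move=> u; rewrite out_sum //.
  have -> : \sum_(i | E i u && ~~ lab i u)
     x i u * cc t0 t * (gbar t / GG u (oth i u) t) * (GG u (oth i u) t + hG u t - hG (oth i u) t) =
     cc t0 t * gbar t * ln 2 + \sum_(i | E i u && ~~ lab i u) k i u * (d u - d (oth i u)).
    rewrite -(x_sum_nlab u) mulr_sumr -big_split; apply: eq_bigr => i /andP[Eiu lb].
    have Gn : GG u (oth i u) t != 0.
      by apply: lt0r_neq0; apply: lt_le_trans eta0 (HG _ _ _); rewrite eq_sym oth_neq.
    have -> : x i u * cc t0 t * (gbar t / GG u (oth i u) t) * (GG u (oth i u) t + hG u t - hG (oth i u) t) =
      cc t0 t * gbar t * x i u * (GG u (oth i u) t / GG u (oth i u) t) + k i u * (d u - d (oth i u)).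
      by rewrite /k /d; ring.
    by rewrite mulfV // mulr1.
  rewrite hBA /gbar /gH /d; ring.
have T : forall u i, E i u && ~~ lab i u ->
    - (d u * (k i u * (d u - d (oth i u)))) <= x i u / eta * (S / 2).
  move=> u i /andP[Eiu lb].
  set v := oth i u.
  have Gp : eta <= GG u v t by apply: HG; rewrite eq_sym oth_neq.
  have G0 : 0 < GG u v t by apply: lt_le_trans Gp.
  have xi0 := x_ge0 Eiu.
  have k0 : 0 <= k i u.
    by rewrite /k; apply: mulr_ge0; [apply: mulr_ge0 | apply: divr_ge0 => //; apply: ltW].
  have kle : k i u <= x i u / eta.
    rewrite /k -mulrA; apply: ler_wpM2l => //.
    have iG : (GG u v t)^-1 <= eta^-1 by rewrite lef_pV2 // posrE.
    have cg : cc t0 t * gbar t <= 1 by have := mulr_ge0 c0 g0; nra.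
    rewrite mulrA; apply: (le_trans (ler_wpM2r _ cg)); first by rewrite invr_ge0 ltW.
    by rewrite mul1r.
  have w : - (d u * (d u - d v)) <= S / 2.
    have := dS v; have := sqr_ge0 (d u - d v); rewrite expr2; nra.
  have -> : - (d u * (k i u * (d u - d v))) = k i u * (- (d u * (d u - d v))) by ring.
  apply: le_trans (ler_wpM2l k0 w) _; apply: ler_wpM2r => //; lra.
have B : forall u, d u * (- (1 - ln 2) * d u - \sum_(i | E i u && ~~ lab i u) k i u * (d u - d (oth i u)))
    <= S / (2 * eta).
  move=> u; rewrite mulrBr mulr_sumr.
  have h1 : d u * (- (1 - ln 2) * d u) <= 0.
    have := sqr_ge0 (d u); rewrite expr2 => h.
    have -> : d u * (- (1 - ln 2) * d u) = - ((1 - ln 2) * (d u * d u)) by ring.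
    rewrite oppr_le0; apply: mulr_ge0 => //; lra.
  have h2 : - (\sum_(i | E i u && ~~ lab i u) d u * (k i u * (d u - d (oth i u)))) <= ln 2 * (S / (2 * eta)).
    rewrite -sumrN -(x_sum_nlab u) mulr_suml; apply: ler_sum => i hi.
    apply: le_trans (T u i hi) _; rewrite invfM; apply/eqW; field; exact: lt0r_neq0.
  have h3 : ln 2 * (S / (2 * eta)) <= S / (2 * eta).
    by rewrite ler_piMl // ?divr_ge0 // ?mulr_ge0 // ?ltW.
  lra.
apply: (@le_trans _ _ (\sum_(u : J) (S / eta))).
  apply: ler_sum => u _.
  have := B u; rewrite -(E1 u) -/(d u); set D := (X in d u * X).
  move=> h; have -> : S / eta = S / (2 * eta) + S / (2 * eta) by field; exact: lt0r_neq0.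
  lra.
by rewrite sumr_const -mulr_natl; apply/eqW; ring.
Qed.

Lemma cont_hG u : {within `[0, 1], continuous (hG u)}.
Proof. exact: (cont_P lawG). Qed.

Lemma cont_GG u v : {within `[0, 1], continuous (GG u v)}.
Proof. rewrite /GG /both_prob; apply: within_contB; [exact: within_contC | exact: (cont_P lawG)]. Qed.

Lemma rate_nonneg t : (forall u v, u != v -> 0 < GG u v t) -> 0 <= gbar t ->
  forall (s : st) i j, 0 <= rG t s i j.
Proof.
move=> HG g0 s i j; rewrite /GEN_rate.
have l0 : 0 <= lam i by case: SA => h _ _ _; apply: ltW.
case: ifP => // _; case: ifP => // _; apply: mulr_ge0 => //.
case: ifP => _; first by rewrite mul1r invr_ge0 ler0n.
case: ifP => // _; apply: sumr_ge0 => v /andP[_ vj] /=.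
have G0 : 0 < GG j v t by apply: HG; rewrite eq_sym.
rewrite /GG in G0.
rewrite /gbar in g0.
case: ifP => _; apply: divr_ge0 => //; last exact: ltW.
by apply: mulr_ge0 => //; exact: ltW.
Qed.

Definition Inv t := (forall s : st, 0 <= p t s) /\ (forall u, hG u t = hA pH t).

Lemma gbar01 t : 0 <= t <= 1 -> 0 <= gbar t <= 1.
Proof.
move=> tin; rewrite /gbar; have := gH_le1 lawH tin; have := gH_ge0 lawH tin.
rewrite /gH; lra.
Qed.

Lemma GG_ge_h u v t : 0 <= t <= 1 -> (forall s : st, 0 <= p t s) -> hG u t <= GG u v t.
Proof.
move=> tin pos; rewrite /GG -(mass1 lawG tin) /hG /both_prob; exact: pair_ge.
Qed.

Lemma inv_open u : 0 <= u < 1 -> (forall t, 0 <= t <= u -> Inv t) ->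
  exists2 d, 0 < d & forall t, u < t < u + d -> t <= 1 -> Inv t.
Proof.
move=> /andP[u0 u1] Hinv.
have uin : 0 <= u <= 1 by rewrite u0 ltW.
have [pu hu] := Hinv u ltac:(by rewrite u0 lexx).
set h := hA pH u.
have h0 : 0 < h := hA_pos lawH uin.
set eta := h / 2.
have eta0 : 0 < eta by rewrite divr_gt0.
have Gu : forall a b, h <= GG a b u by move=> a b; rewrite /h -(hu a); exact: GG_ge_h.
have Hpair : forall ab : J * J, exists2 d, 0 < d & forall t, `|t - u| < d ->
    (ab.1 != ab.2 -> 0 <= t <= 1 -> eta < GG ab.1 ab.2 t).
  case=> a b /=.
  have uin' : [set` `[0, 1]] u by rewrite /= in_itv /=.
  have [d d0 Hd] := within_pt (cont_GG (u:=a) (v:=b)) uin' eta0.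
  exists d => // t tu ab tin.
  have tin' : [set` `[0, 1]] t by rewrite /= in_itv /=.
  have := Hd t tin' tu; rewrite distrC => hd.
  have : GG a b u - GG a b t < eta by exact: le_lt_trans (ler_norm _) hd.
  have := Gu a b; rewrite /eta; lra.
have [del del0 Hdel] := fin_delta Hpair.
set m := Num.min del (1 - u).
have m0 : 0 < m by rewrite lt_min del0 subr_gt0.
have mdel : m <= del by rewrite ge_min lexx.
have m1 : m <= 1 - u by rewrite ge_min lexx orbT.
set b := u + m / 2.
have ub : u < b by rewrite /b; lra.
have b1 : b <= 1 by rewrite /b; lra.
have Gin : forall t, u <= t <= b -> forall a c, a != c -> eta < GG a c t.
  move=> t /andP[h1 h2] a c ac.
  apply: (Hdel t _ (a, c)) => //=.
    by rewrite ger0_norm; rewrite ?subr_ge0 // /b in h2 *; lra.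
  by apply/andP; split; lra.
have pos : forall t, u <= t <= b -> forall s : st, 0 <= p t s.
  apply: (LP lawG u0 b1) => //.
  move=> t /andP[h1 h2] _ s i j _; apply: rate_nonneg.
    by move=> a c ac; apply: lt_trans eta0 (Gin t _ a c ac); rewrite !ltW.
  by case/andP: (@gbar01 t ltac:(apply/andP; split; lra)).
set S := fun t => \sum_(w : J) (hG w t - hA pH t) * (hG w t - hA pH t).
have S0 : forall t, u <= t <= b -> S t = 0.
  apply: (@gronwall0 R S (#|J|%:R / eta) u b t0).
  - by rewrite divr_ge0 // ?ler0n // ltW.
  - apply: continuous_subspaceW (sub_cc u0 b1) _.
    apply: cont_big => w _; apply: within_contM; apply: within_contB;
      [exact: cont_hG | exact: (cont_hA lawH) | exact: cont_hG | exact: (cont_hA lawH)].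
  - by rewrite /S big1 // => w _; rewrite hu subrr mulr0.
  - by move=> t _; apply: sumr_ge0 => w _; rewrite -expr2 sqr_ge0.
  move=> t /andP[h1 h2] tt0.
  have tin : 0 < t < 1 by apply/andP; split; lra.
  have tin' : 0 <= t <= 1 by apply/andP; split; lra.
  eexists.
    apply: is_derive_big => w _.
    have dw := is_derive_sub (deriv_unm lawG w tin tt0) (dhA lawH tin tt0).
    exact: (is_derive_mul dw dw).
  apply: dS_bound => //.
  - by move=> a c ac; apply: ltW; apply: Gin => //; rewrite !ltW.
  - by apply: (eAB lawH).
  - exact: gbar01.
exists (b - u); first by rewrite subr_gt0.
move=> t /andP[h1 h2] t1.
have tub : u <= t <= b by apply/andP; split; lra.
split; first exact: pos.
move=> w; have := sq_le_sum (fun w => hG w t - hA pH t) w.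
rewrite -/(S t) S0 // => hw.
have : (hG w t - hA pH t) * (hG w t - hA pH t) = 0.
  by apply/eqP; rewrite eq_le hw -expr2 sqr_ge0.
by move/eqP; rewrite mulf_eq0 orbb subr_eq0 => /eqP.
Qed.


Lemma inv_all t : 0 <= t <= 1 -> Inv t.
Proof.
move: t; apply: real_ind.
- split.
    by move=> s; case: lawG => -> _ _; case: ifP.
  move=> w; rewrite /hG (init_sum lawG (fun s : st => s w == None)) /= ffunE eqxx.
  by rewrite (hA0 lawH).
- move=> u uin H; split.
    move=> s; case: lawG => _ c _.
    by apply: (closure_ge0 (c s) uin) => t tin; exact: (H t tin).1 s.
  move=> w; apply: (closure_eq (cont_hG (u:=w)) (cont_hA lawH) uin) => t tin.
  exact: (H t tin).2 w.
- exact: inv_open.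
Qed.

Lemma x_pos i u : E i u -> 0 < x i u.
Proof.
move=> Eiu; case: SA => lp _ _ /(_ i) [[j [Hs xj]]|[j1 [j2 [j12 Hs x1 x2]]]].
  have Ek := setE1 Hs; have uj : u = j by apply/eqP; rewrite -Ek.
  by rewrite uj xj.
have Ek := setE2 Hs.
by move: Eiu; rewrite Ek => /orP[] /eqP ->; rewrite ?x1 ?x2 divr_gt0.
Qed.

Lemma final t : 0 <= t <= 1 -> forall i u, E i u ->
  (lab i u -> edge_prob p t i u / x i u = H_q1 pH t / (1 - ln 2)) /\
  (~~ lab i u -> edge_prob p t i u / x i u = H_q2 pH t / ln 2).
Proof.
move=> tin i u Eiu.
have x0 := x_pos Eiu.
have l1 := @ln2_lt1 R; have l0 := @ln2_gt0 R.
have e0 : forall (I' J' : finType) (q : R -> state I' J' -> R) rt i' u',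
   is_law t0 rt q -> edge_prob q 0 i' u' = 0.
  move=> I' J' q rt i' u' lw; rewrite /edge_prob (init_sum lw (fun s => s u' == Some i')) /=.
  by rewrite ffunE.
split => lb.
  set F := fun t => (1 - ln 2) * edge_prob p t i u - x i u * H_q1 pH t.
  have F0 : F t = F 0.
    apply: (@const0 R F t0) => //.
      apply: within_contB; apply: within_contM; try exact: within_contC.
        exact: (cont_P lawG).
      exact: (cont_P lawH).
    move=> t1 t1in t1t0.
    have := is_derive_sub (is_derive_cmul (1 - ln 2) (deriv_edge lawG i u t1in t1t0))
      (is_derive_cmul (x i u) (deriv_edge lawH Honly_a Ha t1in t1t0)).
    move=> H; apply: (is_derive_eq H).
    have t1in' : 0 <= t1 <= 1 by case/andP: t1in => a b; rewrite !ltW.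
    rewrite sum_lab // rH_oa_a ((inv_all t1in').2 u) /hA; ring.
  move: F0; rewrite /F /H_q1 (e0 _ _ _ _ _ _ lawG) (e0 _ _ _ _ _ _ lawH) !mulr0 subrr => /eqP.
  rewrite subr_eq0 => /eqP h.
  have xn : x i u != 0 by apply: lt0r_neq0.
  have ln' : 1 - ln (2:R) != 0 by apply: lt0r_neq0; lra.
  apply/eqP; rewrite eqr_div //; apply/eqP.
  by rewrite mulrC h mulrC.
set F := fun t => ln 2 * edge_prob p t i u - x i u * H_q2 pH t.
have F0 : F t = F 0.
  apply: (@const0 R F t0) => //.
    apply: within_contB; apply: within_contM; try exact: within_contC.
      exact: (cont_P lawG).
    exact: (cont_P lawH).
  move=> t1 t1in t1t0.
  have := is_derive_sub (is_derive_cmul (ln 2) (deriv_edge lawG i u t1in t1t0))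
    (is_derive_cmul (x i u) (deriv_edge lawH Hboth Ha t1in t1t0)).
  move=> H; apply: (is_derive_eq H).
  have t1in' : 0 <= t1 <= 1 by case/andP: t1in => a b; rewrite !ltW.
  have [pos hh] := inv_all t1in'.
  have Gn : GG u (oth i u) t1 != 0.
    apply: lt0r_neq0; apply: lt_le_trans (GG_ge_h _ _ t1in' pos).
    by rewrite hh; apply: (hA_pos lawH).
  rewrite sum_nlab // (rH_both_a lawH) // hh hh (eAB lawH t1in') /gbar /gH.
  set G := GG u (oth i u) t1.
  have -> : x i u * cc t0 t1 * ((1 - H_g pH t1) / G) * (G + hA pH t1 - hA pH t1) =
     x i u * cc t0 t1 * (1 - H_g pH t1) * (G / G) by ring.
  rewrite mulfV //; ring.
move: F0; rewrite /F /H_q2 (e0 _ _ _ _ _ _ lawG) (e0 _ _ _ _ _ _ lawH) !mulr0 subrr => /eqP.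
rewrite subr_eq0 => /eqP h.
have xn : x i u != 0 by apply: lt0r_neq0.
have ln' : ln (2:R) != 0 by apply: lt0r_neq0.
apply/eqP; rewrite eqr_div //; apply/eqP.
by rewrite mulrC h mulrC.
Qed.

End GEN.


Unset Implicit Arguments. Set Strict Implicit. Set Printing Implicit Defensive.
Local Close Scope classical_set_scope.

Theorem lemma4p10 (R : realType) (I J : finType) (E : I -> J -> bool)
  (lam : I -> R) (x : I -> J -> R) (lab : I -> J -> bool) (t0 : R)
  (pH : R -> state 'I_3 'I_2 -> R) (p : R -> state I J -> R) :
  standing_assumption E lam x ->
  valid_labeling E lam x lab ->
  is_law t0 (RES_rate t0) pH ->
  is_law t0 (GEN_rate E lam lab t0 pH p) p ->
  forall t : R, 0 <= t <= 1 ->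
  forall (i : I) (u : J), E i u ->
    (lab i u -> edge_prob p t i u / x i u = H_q1 pH t / (1 - ln 2)) /\
    (~~ lab i u -> edge_prob p t i u / x i u = H_q2 pH t / ln 2).
Proof.
move=> SA VL lawH lawG t tin i u Eiu.
exact: (final SA VL lawH lawG tin Eiu).
Qed.
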